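(* Let $(a_1,a_2)\in\mathbb{Z}^2$ and let $x=x_1^{-a_1}x_2^{-a_2}\sum_{p,q\ge0}c(p,q)x_1^px_2^q\in\mathcal{T}_1$ be pointed at $(a_1,a_2)$, and suppose $x\in\mathcal{T}_0^{\ge0}\cap\mathcal{T}_1^{\ge0}\cap\mathcal{T}_2^{\ge0}$. Then for all $(p,q)\in\mathbb{Z}_{\ge0}^2$ the following inequality holds in $\Bbbk$: $$c(p,q)\ge\max\Big(\Big[\sum_{k=1}^p\sum_{(k_1,\ldots,k_{d_2})\vdash k}(-1)^{k-1}c(p-k_1-2k_2-\cdots-d_2k_{d_2},q)\varrho_1^{k_1}\cdots\varrho_{d_2}^{k_{d_2}}\binom{a_2-q+k-1}{a_2-q-1,k_1,\ldots,k_{d_2}}\Big]_+,$$ $$\Big[\sum_{\ell=1}^q\sum_{(\ell_1,\ldots,\ell_{d_1})\vdash\ell}(-1)^{\ell-1}c(p,q-\ell_1-2\ell_2-\cdots-d_1\ell_{d_1})\rho_1^{\ell_1}\cdots\rho_{d_1}^{\ell_{d_1}}\binom{a_1-p+\ell-1}{a_1-p-1,\ell_1,\ldots,\ell_{d_1}}\Big]_+\Big).$$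
   Context: $\Bbbk$ is an ordered field with positive cone $\Pi$ ($a\le b$ iff $b-a\in\Pi$), $[a]_+=\max(a,0)$. $P_1(z)=\sum_{t=0}^{d_1}\rho_tz^t$ and $P_2(z)=\sum_{t=0}^{d_2}\varrho_tz^t$ in $\Pi[z]$ are monic palindromic ($P(z)=z^dP(z^{-1})$, $d=\deg P$). With $x_1,x_2$ commuting indeterminates, define $x_k\in\Bbbk(x_1,x_2)$ for $k\in\mathbb{Z}$ by $x_{k+1}x_{k-1}=P_1(x_k)$ if $k$ even, $=P_2(x_k)$ if $k$ odd. $\underline\Bbbk$ is the $\mathbb{Z}$-subalgebra of $\Bbbk$ generated by the coefficients of $P_1,P_2$, $\underline\Bbbk_{\ge0}=\underline\Bbbk\cap\Pi$, $\mathcal{T}_k=\underline\Bbbk[x_k^{\pm1},x_{k+1}^{\pm1}]$, $\mathcal{T}_k^{\ge0}=\underline\Bbbk_{\ge0}[x_k^{\pm1},x_{k+1}^{\pm1}]$. Pointed at $(a_1,a_2)$ means $c(p,q)\in\underline\Bbbk$ and $c(0,0)=1$; set $c(p,q)=0$ if $p<0$ or $q<0$. Multinomial convention: for integers $n,k_0$ and $k_1,\dots,k_r\ge0$ with $k=\sum_{i\ge1}k_i$ and $n=k_0+k$, $\binom{n}{k_0,k_1,\dots,k_r}=\binom{n}{k}\frac{k!}{k_1!\cdots k_r!}$ with $\binom{n}{k}=n(n-1)\cdots(n-k+1)/k!$; $(k_1,\dots,k_r)\vdash k$ means nonnegative integers summing to $k$. *)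

(* Defs.v *)
From HB Require Import structures.
From mathcomp Require Import all_boot all_order all_algebra.
Set Implicit Arguments. Unset Strict Implicit. Unset Printing Implicit Defensive.
Import Order.TTheory GRing.Theory Num.Theory.
Local Open Scope ring_scope.

Section Defs.
Variable R : realFieldType.

(* The field of rational functions k(x1,x2), realised as the fraction field
   of {poly {poly R}}: x1 is the inner variable, x2 the outer one. *)
Definition ratfun := {fraction {poly {poly R}}}.
Definition cst (r : R) : ratfun := tofrac ((r%:P)%:P).
Definition X1 : ratfun := tofrac (('X)%:P).
Definition X2 : ratfun := tofrac 'X.

Definition peval (P : {poly R}) (y : ratfun) : ratfun := (map_poly cst P).[y].

(* The sequence x_k, k in Z: x_{k+1} x_{k-1} = P1(x_k) if k even, P2(x_k) if k odd. *)
Definition Pk (P1 P2 : {poly R}) (k : int) : {poly R} :=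
  if (k %% 2)%Z == 0 then P1 else P2.

(* fwd n = (x_{n+1}, x_{n+2}) *)
Fixpoint fwd (P1 P2 : {poly R}) (n : nat) : ratfun * ratfun :=
  match n with
  | 0 => (X1, X2)
  | n'.+1 => let: (a, b) := fwd P1 P2 n' in
             (b, peval (Pk P1 P2 (n'.+2)%:Z) b / a)
  end.

(* bwd n = (x_{1-n}, x_{2-n}) *)
Fixpoint bwd (P1 P2 : {poly R}) (n : nat) : ratfun * ratfun :=
  match n with
  | 0 => (X1, X2)
  | n'.+1 => let: (a, b) := bwd P1 P2 n' in
             (peval (Pk P1 P2 (1 - n'%:Z)) a / b, a)
  end.

Definition clus (P1 P2 : {poly R}) (k : int) : ratfun :=
  match k with
  | Posz n => match n with 0 => (bwd P1 P2 1).1 | n'.+1 => (fwd P1 P2 n').1 end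
  | Negz n => (bwd P1 P2 n.+2).1   (* Negz n = -(n+1), and 1 - (n+2) = -(n+1) *)
  end.

Inductive ksub (P1 P2 : {poly R}) : R -> Prop :=
  | ksub_c1 i : ksub P1 P2 P1`_i
  | ksub_c2 i : ksub P1 P2 P2`_i
  | ksub_1 : ksub P1 P2 1
  | ksub_add a b : ksub P1 P2 a -> ksub P1 P2 b -> ksub P1 P2 (a + b)
  | ksub_opp a : ksub P1 P2 a -> ksub P1 P2 (- a)
  | ksub_mul a b : ksub P1 P2 a -> ksub P1 P2 b -> ksub P1 P2 (a * b).

Definition ksub_nonneg (P1 P2 : {poly R}) (r : R) : Prop := ksub P1 P2 r /\ 0 <= r.

Definition laurent_in (S : R -> Prop) (u v x : ratfun) : Prop :=
  exists s : seq (R * int * int),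
    (forall t, t \in s -> S t.1.1) /\
    x = \sum_(t <- s) cst t.1.1 * u ^ t.1.2 * v ^ t.2.

Definition Tnonneg (P1 P2 : {poly R}) (k : int) (x : ratfun) : Prop :=
  laurent_in (ksub_nonneg P1 P2) (clus P1 P2 k) (clus P1 P2 (k + 1)) x.

Definition gbinom (n : int) (k : nat) : R :=
  (\prod_(i < k) (n - i%:Z)%:~R) / (k`!)%:R.

(* multinomial binom(n; k0, k1, ..., kr) with k = sum ks and k0 = n - k:
   binom(n, k) * k! / (k1! ... kr!) *)
Definition multinom (n : int) (ks : seq nat) : R :=
  gbinom n (sumn ks) * ((sumn ks)`!)%:R / (\prod_(j <- ks) (j`!)%:R).

Definition cZ (c : nat -> nat -> R) (p q : int) : R :=
  match p, q with Posz p', Posz q' => c p' q' | _, _ => 0 end.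

Definition pos_part (a : R) : R := Num.max a 0.

End Defs.

(* Main.v *)
Require Import Defs.
From HB Require Import structures.
From mathcomp Require Import all_boot all_order all_algebra.
From mathcomp Require Import zify ring lra.
Import Order.TTheory GRing.Theory Num.Theory.
Local Open Scope ring_scope.
Set Implicit Arguments. Unset Strict Implicit. Unset Printing Implicit Defensive.
Local Notation "x %:F" := (@FracField.tofrac _ x).

Lemma gbinom0 (R : realFieldType) (n : int) : gbinom R n 0 = 1.
Proof. by rewrite /gbinom big_ord0 fact0 divr1. Qed.

Lemma gbinomS (R : realFieldType) (n : int) (k : nat) :
  gbinom R (n + 1) k.+1 = gbinom R n k.+1 + gbinom R n k.
Proof.
rewrite /gbinom big_ord_recl big_ord_recr /=.
have E : forall i : 'I_k, (n + 1 - (lift ord0 i)%:Z) = n - i%:Z.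
  move=> i; rewrite lift0 /=; lia.
under eq_bigr do rewrite E.
set Q := \prod_(i < k) _.
have hk : (k.+1)%:R != 0 :> R by rewrite pnatr_eq0.
have hf : (k`!)%:R != 0 :> R by rewrite pnatr_eq0 -lt0n fact_gt0.
rewrite factS natrM subr0 !rmorphB !rmorphD /= rmorph1.
by field; rewrite hf addrC natr1 hk.
Qed.

Lemma gbinom0S (R : realFieldType) (k : nat) : gbinom R 0 k.+1 = 0.
Proof. by rewrite /gbinom big_ord_recl /= subr0 mul0r mul0r. Qed.

Lemma gbinom_neg (R : realFieldType) (m : int) (k : nat) :
  gbinom R (- m) k = (-1) ^+ k * gbinom R (m + k%:Z - 1) k.
Proof.
rewrite /gbinom mulrA; congr (_ / _).
rewrite [in RHS](reindex_inj rev_ord_inj) /=.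
have -> : \prod_(j < k) (m + k%:Z - 1 - (k - j.+1)%N%:Z)%:~R =
          \prod_(j < k) (m + j%:Z)%:~R :> R.
  apply: eq_bigr => j _; congr (_%:~R); have := ltn_ord j; lia.
transitivity (\prod_(j < k) - (m + j%:Z)%:~R : R).
  by apply: eq_bigr => j _; rewrite -rmorphN /= opprD.
by rewrite prodrN card_ord.
Qed.

Definition Yp (R : realFieldType) (Q : {poly R}) : {poly R} :=
  \sum_(i < (size Q).-1) Q`_i.+1 *: 'X^(i.+1).

Lemma Q_split (R : realFieldType) (Q : {poly R}) : Q`_0 = 1 -> Q = 1 + Yp Q.
Proof.
move=> h0.
have hs : (0 < size Q)%N.
  rewrite lt0n size_poly_eq0; apply/eqP => Q0; move: h0; rewrite Q0 coef0.
  by move/eqP; rewrite eq_sym oner_eq0.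
rewrite -{1}[Q]coefK poly_def -(prednK hs) big_ord_recl /= h0 expr0 scale1r.
by congr (_ + _); apply: eq_bigr => i _; rewrite lift0.
Qed.

Lemma Yp_low (R : realFieldType) (Q : {poly R}) (k i : nat) :
  (i < k)%N -> (Yp Q ^+ k)`_i = 0.
Proof.
move=> hik.
have -> : Yp Q = 'X * \sum_(i < (size Q).-1) Q`_i.+1 *: 'X^i.
  rewrite /Yp mulr_sumr; apply: eq_bigr => j _; by rewrite exprS scalerAr.
by rewrite exprMn coefXnM hik.
Qed.

Definition eqm (R : realFieldType) (L : nat) (f g : {poly R}) :=
  forall i, (i <= L)%N -> f`_i = g`_i.

Lemma eqm_mull (R : realFieldType) L (f g h : {poly R}) :
  eqm L f g -> eqm L (h * f) (h * g).
Proof.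
move=> e i hi; rewrite !coefM; apply: eq_bigr => j _; rewrite e //.
exact: leq_trans (leq_subr _ _) hi.
Qed.

Lemma eqm_mulr (R : realFieldType) L (f g h : {poly R}) :
  eqm L f g -> eqm L (f * h) (g * h).
Proof. by move=> e; rewrite ![_ * h]mulrC; apply: eqm_mull. Qed.

Lemma eqm_trans (R : realFieldType) L (f g h : {poly R}) :
  eqm L f g -> eqm L g h -> eqm L f h.
Proof. by move=> e1 e2 i hi; rewrite e1 // e2. Qed.

Definition Bs (R : realFieldType) (L : nat) (Y : {poly R}) (a : int) :=
  \sum_(k < L.+1) gbinom R a k *: Y ^+ k.

Lemma Bs0 (R : realFieldType) L (Y : {poly R}) : Bs L Y 0 = 1.
Proof.
rewrite /Bs big_ord_recl gbinom0 expr0 scale1r big1 ?addr0 // => i _.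
by rewrite lift0 gbinom0S scale0r.
Qed.

Lemma Bs_step (R : realFieldType) L (Y : {poly R}) (a : int) :
  (forall k i, (i < k)%N -> (Y ^+ k)`_i = 0) ->
  eqm L (Bs L Y a * (1 + Y)) (Bs L Y (a + 1)).
Proof.
move=> hY.
have E : Bs L Y a * (1 + Y) = Bs L Y (a + 1) + gbinom R a L *: Y ^+ L.+1.
  rewrite mulrDr mulr1 /Bs mulr_suml.
  rewrite [X in _ + X](eq_bigr (fun k : 'I_L.+1 => gbinom R a k *: Y ^+ k.+1));
    last by move=> k _; rewrite -scalerAl exprSr.
  rewrite [X in X + _]big_ord_recl [X in _ + X]big_ord_recr /=.
  rewrite [in RHS]big_ord_recl /= !gbinom0.
  rewrite !addrA; congr (_ + _); rewrite -!addrA; congr (_ + _).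
  rewrite -big_split /=; apply: eq_bigr => i _.
  by rewrite /bump add1n gbinomS scalerDl.
move=> i hi; rewrite E coefD coefZ hY ?mulr0 ?addr0 //.
Qed.

Lemma Bs_pow (R : realFieldType) L (Y : {poly R}) (a : int) (M : nat) :
  (forall k i, (i < k)%N -> (Y ^+ k)`_i = 0) ->
  eqm L (Bs L Y a * (1 + Y) ^+ M) (Bs L Y (a + M%:Z)).
Proof.
move=> hY; elim: M => [|M IH]; first by rewrite expr0 mulr1 addr0.
rewrite exprSr mulrA.
apply: eqm_trans (eqm_mulr _ IH) _.
have -> : a + M.+1%:Z = (a + M%:Z) + 1 by rewrite -addn1 PoszD addrA.
exact: Bs_step.
Qed.

Lemma core (R : realFieldType) (Q g H : {poly R}) (s M M' p : nat) (m : int) :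
  Q`_0 = 1 -> M'%:Z = M%:Z + m -> 'X^s * g * Q ^+ M = Q ^+ M' * H ->
  H`_(s + p) = \sum_(k < (s + p).+1) gbinom R (- m) k * (Yp Q ^+ k * g)`_p.
Proof.
move=> h0 hM E.
set L := (s + p)%N.
have hY := @Yp_low R Q.
have QE := Q_split h0.
have e1 : eqm L (Bs L (Yp Q) (- M'%:Z) * Q ^+ M') 1.
  rewrite {2}QE; have := @Bs_pow R L (Yp Q) (- M'%:Z) M' hY.
  by rewrite addNr Bs0.
have e2 : eqm L (Bs L (Yp Q) (- M'%:Z) * Q ^+ M) (Bs L (Yp Q) (- m)).
  rewrite {2}QE; have := @Bs_pow R L (Yp Q) (- M'%:Z) M hY.
  by rewrite hM opprD addrAC addNr add0r.
transitivity ((Bs L (Yp Q) (- M'%:Z) * Q ^+ M' * H)`_L).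
  by rewrite (eqm_mulr H e1) // mul1r.
rewrite -mulrA -E [_ * Q ^+ M]mulrC mulrA (eqm_mulr _ e2) //.
rewrite mulrCA coefXnM ltnNge leq_addr /= addKn.
rewrite /Bs mulr_suml coef_sum; apply: eq_bigr => k _.
by rewrite -scalerAl coefZ.
Qed.

Definition fcons (T : finType) (d : nat) (t : T) (g : {ffun 'I_d -> T}) :
  {ffun 'I_d.+1 -> T} :=
  [ffun i : 'I_d.+1 => if unlift ord0 i is Some j then g j else t].

Lemma fcons0 (T : finType) d (t : T) (g : {ffun 'I_d -> T}) : fcons t g ord0 = t.
Proof. by rewrite ffunE unlift_none. Qed.

Lemma fconsS (T : finType) d (t : T) (g : {ffun 'I_d -> T}) j :
  fcons t g (lift ord0 j) = g j.
Proof. by rewrite ffunE liftK. Qed.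

Lemma big_ffunS (V : nmodType) (T : finType) d
   (P : pred {ffun 'I_d.+1 -> T}) (F : {ffun 'I_d.+1 -> T} -> V) :
  \sum_(f | P f) F f =
  \sum_(t : T) \sum_(g : {ffun 'I_d -> T} | P (fcons t g)) F (fcons t g).
Proof.
pose h (u : T * {ffun 'I_d -> T}) := fcons u.1 u.2.
pose h' (f : {ffun 'I_d.+1 -> T}) := (f ord0, [ffun j => f (lift ord0 j)]).
have hK : cancel h h'.
  by case=> t g; rewrite /h /h' /= fcons0; congr (_, _); apply/ffunP => j;
     rewrite ffunE fconsS.
have h'K : cancel h' h.
  move=> f; apply/ffunP => i; rewrite /h /h' /= ffunE.
  by case: unliftP => [j ->|->]; rewrite ?ffunE.
rewrite (reindex h); last by exists h' => u _.
rewrite pair_big_dep /=; apply: eq_big => [[t g]|[t g] _] //.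
Qed.

Lemma multinom_thm (R : realFieldType) (d : nat) (z : 'I_d -> {poly R})
  (B k : nat) : (k <= B)%N ->
  (\sum_(i < d) z i) ^+ k =
  \sum_(ks : {ffun 'I_d -> 'I_B.+1} | (\sum_(i < d) (ks i : nat) == k)%N)
     ((k`!)%:R / \prod_(i < d) ((ks i)`!)%:R) *: \prod_(i < d) z i ^+ ks i.
Proof.
elim: d z k => [|d IH] z k hk.
  rewrite big_ord0 (eq_bigl (fun=> k == 0)%N); last by move=> ks; rewrite big_ord0.
  case: k hk => [|k] hk.
    rewrite expr0 (eq_bigr (fun=> 1)); last first.
      by move=> ks _; rewrite !big_ord0 fact0 divr1 scale1r.
    by rewrite sumr_const card_ffun !card_ord expn0.
  by rewrite exprS mul0r big_pred0.
rewrite big_ord_recl addrC exprDn big_ffunS /=.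
set S := \sum_(i0 < d) z (lift ord0 i0).
pose H (t : nat) := S ^+ (k - t) * z ord0 ^+ t *+ 'C(k, t).
rewrite (big_ord_widen B.+1 H) ?ltnS // big_mkcond /=.
apply: eq_bigr => t _.
under eq_bigl do rewrite big_ord_recl fcons0.
under eq_bigr do rewrite !big_ord_recl !fcons0.
have hf : forall n : nat, (n`!)%:R != 0 :> R.
  by move=> n; rewrite pnatr_eq0 -lt0n fact_gt0.
case: (leqP (t : nat) k) => htk; last first.
  rewrite ltnS leqNgt htk /= big_pred0 // => g; apply/negbTE.
  by rewrite neq_ltn; apply/orP; right; apply: leq_trans htk (leq_addr _ _).
rewrite ltnS htk /H (IH _ (k - t)%N); last by apply: leq_trans (leq_subr _ _) hk.
rewrite mulr_suml -sumrMnl; apply: eq_big => [g|g _].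
  have -> : (\sum_(i < d) fcons t g (lift ord0 i))%N = (\sum_(i < d) g i)%N.
    by apply: eq_bigr => i _; rewrite fconsS.
  by apply/eqP/eqP => [->|<-]; rewrite ?addKn // subnKC.
have -> : \prod_(i < d) ((fcons t g (lift ord0 i))`!)%:R = \prod_(i < d) ((g i)`!)%:R :> R.
  by apply: eq_bigr => i _; rewrite fconsS.
have -> : \prod_(i < d) z (lift ord0 i) ^+ fcons t g (lift ord0 i) = \prod_(i < d) z (lift ord0 i) ^+ g i.
  by apply: eq_bigr => i _; rewrite fconsS.
set P := \prod_(i < d) _%:R; set Pz := \prod_(i < d) _.
have hP : P != 0 by rewrite /P prodf_seq_neq0; apply/allP => i _; exact: hf.
rewrite [z ord0 ^+ t * _]mulrC -scaler_nat -scalerAl scalerA -(bin_fact htk) !natrM.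
congr (_ *: _); field.
by rewrite hP !hf.
Qed.

Lemma Yp_hi (R : realFieldType) (Q g : {poly R}) (k p : nat) :
  (p < k)%N -> (Yp Q ^+ k * g)`_p = 0.
Proof.
move=> hk.
have -> : Yp Q = 'X * \sum_(i < (size Q).-1) Q`_i.+1 *: 'X^i.
  rewrite /Yp mulr_sumr; apply: eq_bigr => j _; by rewrite exprS scalerAr.
by rewrite exprMn -mulrA coefXnM hk.
Qed.

Lemma coefXnM_F (R : realFieldType) (g : {poly R}) (F : int -> R) (w p : nat) :
  (forall n : nat, F n = g`_n) -> (forall n : nat, F (Negz n) = 0) ->
  ('X^w * g)`_p = F (p%:Z - w%:Z).
Proof.
move=> hP hN; rewrite coefXnM; case: ltnP => h.
  have -> : p%:Z - w%:Z = Negz (w - p).-1.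
    rewrite NegzE prednK ?subn_gt0 //; lia.
  by rewrite hN.
by rewrite subzn // hP.
Qed.

Lemma combine (R : realFieldType) (Q g : {poly R}) (F : int -> R) (m : int)
  (L p : nat) : (p <= L)%N ->
  (forall n : nat, F n = g`_n) -> (forall n : nat, F (Negz n) = 0) ->
  \sum_(k < L.+1) gbinom R (- m) k * (Yp Q ^+ k * g)`_p =
  g`_p - \sum_(1 <= k < p.+1)
         \sum_(ks : {ffun 'I_(size Q).-1 -> 'I_k.+1}
               | (\sum_(i < (size Q).-1) (ks i : nat) == k)%N)
           (-1) ^+ k.-1
           * F (p%:Z - (\sum_(i < (size Q).-1) (i.+1 * ks i)%N)%:Z)
           * (\prod_(i < (size Q).-1) Q`_i.+1 ^+ ks i)
           * multinom R (m + k%:Z - 1)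
               [seq (ks i : nat) | i <- enum 'I_(size Q).-1].
Proof.
move=> hpL hP hN.
set T := fun k : nat => gbinom R (- m) k * (Yp Q ^+ k * g)`_p.
transitivity (\sum_(k < p.+1) T k).
  rewrite [RHS](big_ord_widen L.+1 T) // [RHS]big_mkcond; apply: eq_bigr => k _.
  by case: ltnP => // h; rewrite /T Yp_hi ?mulr0.
rewrite -(big_mkord xpredT) big_ltn // {1}/T gbinom0 expr0 mul1r mul1r.
rewrite -sumrN; congr (_ + _); apply: eq_big_nat => k /andP[hk1 _].
rewrite /T /Yp (@multinom_thm R _ (fun i => Q`_i.+1 *: 'X^(i.+1)) k k) //.
rewrite mulr_suml coef_sum mulr_sumr -sumrN; apply: eq_bigr => ks /eqP hs.
have -> : \prod_(i < (size Q).-1) (Q`_i.+1 *: 'X^(i.+1)) ^+ ks i =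
    (\prod_(i < (size Q).-1) Q`_i.+1 ^+ ks i) *:
      'X^(\sum_(i < (size Q).-1) (i.+1 * ks i))%N.
  rewrite (eq_bigr (fun i : 'I_(size Q).-1 => Q`_i.+1 ^+ ks i *: 'X^(i.+1 * ks i)));
    last by move=> i _; rewrite exprZn -exprM.
  by rewrite scaler_prod prodrXr.
rewrite -!scalerAl !coefZ (coefXnM_F _ _ hP hN).
have hs' : sumn [seq (ks i : nat) | i <- enum 'I_(size Q).-1] = k.
  by rewrite sumnE big_map big_enum /= hs.
have hp' : \prod_(j <- [seq (ks i : nat) | i <- enum 'I_(size Q).-1]) (j`!)%:R =
           \prod_(i < (size Q).-1) ((ks i)`!)%:R :> R.
  by rewrite big_map big_enum.
rewrite /multinom hs' hp' gbinom_neg.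
have e : (-1) ^+ k = - (-1) ^+ k.-1 :> R by rewrite -{1}(prednK hk1) exprS mulN1r.
rewrite e; ring.
Qed.

Lemma sum_coefX (S : comNzRingType) (p : {poly S}) :
  \sum_(i < size p) (p`_i)%:P * 'X^i = p.
Proof.
by rewrite -[RHS]coefK poly_def; apply: eq_bigr => i _; rewrite mul_polyC.
Qed.

Lemma sum_coefX_wide (S : comNzRingType) (p : {poly S}) n :
  (size p <= n)%N -> \sum_(i < n) (p`_i)%:P * 'X^i = p.
Proof.
move=> hn; transitivity (\poly_(i < n) p`_i).
  by rewrite poly_def; apply: eq_bigr => i _; rewrite mul_polyC.
apply/polyP => k; rewrite coef_poly; case: ltnP => // h.
by rewrite nth_default // (leq_trans hn h).
Qed.

Lemma peval_sum (R : realFieldType) (P : {poly R}) (y : ratfun R) :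
  peval P y = \sum_(i < size P) cst P`_i * y ^+ i.
Proof.
rewrite /peval (horner_coef_wide _ (size_poly _ _)).
by apply: eq_bigr => i _; rewrite coef_map_id0 // /cst !rmorph0.
Qed.

Lemma pevalX1 (R : realFieldType) (P : {poly R}) :
  peval P (X1 R) = (P%:P)%:F.
Proof.
transitivity ((\sum_(i < size P) (P`_i)%:P * 'X^i)%:P%:F); last by rewrite sum_coefX.
rewrite peval_sum !rmorph_sum /=; apply: eq_bigr => i _.
by rewrite /cst /X1 !(rmorphM, rmorphXn).
Qed.

Lemma pevalX2 (R : realFieldType) (P : {poly R}) :
  peval P (X2 R) = (P^:P)%:F.
Proof.
transitivity ((\sum_(i < size P) ((P^:P)`_i)%:P * 'X^i)%:F).
  rewrite peval_sum !rmorph_sum /=; apply: eq_bigr => i _.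
  by rewrite /cst /X2 rmorphM /= !rmorphXn coef_map.
by rewrite sum_coefX_wide // size_map_polyC.
Qed.

Lemma hz (R : realFieldType) (u : ratfun R) (z : int) (M : nat) :
  u != 0 -> 0 <= M%:Z + z -> u ^ z * u ^+ M = u ^+ absz (M%:Z + z).
Proof.
move=> hu h.
have -> : u ^+ M = u ^ (M%:Z) by [].
by rewrite -expfzDr // addrC -{1}(gez0_abs h).
Qed.

Lemma AC6 (F : comNzRingType) (a b c d e f : F) :
  a * b * c * (d * e * f) = c * (a * d) * (b * e) * f.
Proof. ring. Qed.

Lemma AC7 (F : comNzRingType) (c w v u x y z : F) :
  c * (w * v) * u * (x * y * z) = c * (w * z) * (v * y) * (u * x).
Proof. ring. Qed.

Lemma clear (R : realFieldType) (U V W G : {poly {poly R}}) (a b : int)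
  (s : seq (R * int * int)) (e1 e2 : R * int * int -> int) (M : nat) :
  U != 0 -> V != 0 -> W != 0 ->
  0 <= M%:Z - a -> 0 <= M%:Z - b ->
  (forall t, t \in s -> [/\ 0 <= M%:Z + e1 t, 0 <= M%:Z - e1 t & 0 <= M%:Z + e2 t]) ->
  U%:F ^ (- a) * V%:F ^ (- b) * G%:F =
    \sum_(t <- s) cst t.1.1 * (W%:F / V%:F) ^ (e1 t) * U%:F ^ (e2 t) ->
  G * U ^+ absz (M%:Z - a) * V ^+ absz (M%:Z - b) * W ^+ M =
  \sum_(t <- s) ((t.1.1)%:P)%:P * W ^+ absz (M%:Z + e1 t) * V ^+ absz (M%:Z - e1 t)
      * U ^+ absz (M%:Z + e2 t).
Proof.
move=> hU hV hW ha hb hs E.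
have hU' : U%:F != 0 by rewrite tofrac_eq0.
have hV' : V%:F != 0 by rewrite tofrac_eq0.
have hW' : W%:F != 0 by rewrite tofrac_eq0.
set K := U%:F ^+ M * V%:F ^+ M * W%:F ^+ M.
apply/eqP; rewrite -tofrac_eq; apply/eqP.
transitivity (U%:F ^ (- a) * V%:F ^ (- b) * G%:F * K).
  rewrite /K (AC6 (U%:F ^ (- a))).
  rewrite (hz hU' ha) (hz hV' hb).
  by rewrite !rmorphM /= !rmorphXn.
rewrite E mulr_suml rmorph_sum; apply: eq_big_seq => t ht.
have [h1 h2 h3] := hs t ht.
rewrite expfzMl exprz_inv /K AC7 (hz hW' h1) (hz hV' h2) (hz hU' h3).
by rewrite /cst !rmorphM /= !rmorphXn.
Qed.

Lemma extract (R : realFieldType) (Q : {poly R}) (G : {poly {poly R}})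
  (sa sb M : nat) (s : seq (R * int * int)) (r : R * int * int -> R)
  (f1 f2 f3 : R * int * int -> nat) (q : nat) :
  (forall t, t \in s -> 0 <= r t) ->
  (forall t, t \in s -> (f1 t + f2 t = M + M)%N) -> (sb + q <= M + M)%N ->
  G * 'Y ^+ sa * 'X ^+ sb * (Q%:P) ^+ M =
    \sum_(t <- s) ((r t)%:P)%:P * (Q%:P) ^+ f1 t * 'X ^+ f2 t * 'Y ^+ f3 t ->
  exists H : {poly R}, (forall j, 0 <= H`_j) /\
    'X^sa * G`_q * Q ^+ M = Q ^+ (M + M - (sb + q)) * H.
Proof.
move=> hr hf hq E.
set n := (sb + q)%N.
exists (\sum_(t <- s | f2 t == n) r t *: 'X^(f3 t)); split.
  move=> j; rewrite coef_sum big_seq_cond; apply: sumr_ge0 => t /andP[ht _].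
  by rewrite coefZ coefXn mulr_ge0 ?ler0n ?hr.
have := congr1 (fun P : {poly {poly R}} => P`_n) E.
rewrite -!rmorphXn /=.
have -> : G * ('X^sa)%:P * 'X^sb * (Q ^+ M)%:P = G * 'X^sb * ('X^sa * Q ^+ M)%:P.
  by rewrite polyCM !mulrA [G * _ * 'X^sb]mulrAC.
rewrite coefMC coefMXn ltnNge leq_addr /= addKn mulrA [_ * G`_q]mulrC => ->.
rewrite coef_sum mulr_sumr [RHS]big_mkcond /=; apply: eq_big_seq => t ht.
rewrite mulrAC -!rmorphXn /= -!rmorphM /= coefCM coefXn eq_sym.
case: eqP => h; last by rewrite mulr0.
have -> : (M + M - n = f1 t)%N by rewrite -h -(hf t ht) addnK.
by rewrite mulr1 -scalerAr mul_polyC scalerAl mulrC.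
Qed.

Lemma poly_nz_roots (R : realFieldType) (p : {poly R}) :
  (forall z : R, z != 0 -> p.[z] = 0) -> p = 0.
Proof.
move=> h; apply/eqP; apply: contraT => hp.
have := max_poly_roots hp (rs := mkseq (fun i => (i.+1)%:R : R) (size p)).
rewrite size_mkseq ltnn; apply.
  apply/allP => z /mapP[i _ ->]; apply/rootP; apply: h.
  by rewrite pnatr_eq0.
by rewrite mkseq_uniq // => i j /eqP; rewrite eqr_nat => /eqP [].
Qed.

Lemma pal0 (R : realFieldType) (P : {poly R}) : P \is monic ->
  (forall z : R, z != 0 -> P.[z] = z ^+ (size P).-1 * P.[z^-1]) -> P`_0 = 1.
Proof.
move=> hm hpal.
set d := (size P).-1.
have hs : size P = d.+1.
  rewrite /d prednK // lt0n size_poly_eq0; exact: monic_neq0.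
set Qr := \sum_(i < d.+1) P`_i *: 'X^(d - i).
have E : P = Qr.
  apply/eqP; rewrite -subr_eq0; apply/eqP; apply: poly_nz_roots => z hz.
  rewrite hornerD hornerN hpal //; apply/eqP; rewrite subr_eq0; apply/eqP.
  rewrite (horner_coef_wide _ (eq_leq hs)) mulr_sumr horner_sum.
  apply: eq_bigr => i _; rewrite hornerZ hornerXn mulrCA exprVn.
  by rewrite -exprB ?unitfE // -ltnS.
rewrite E coef_sum big_ord_recr /= coefZ coefXn subnn eqxx mulr1.
rewrite big1 ?add0r => [|i _]; last first.
  by rewrite coefZ coefXn eq_sym subn_eq0 leqNgt ltn_ord mulr0.
by move: hm; rewrite monicE lead_coefE hs => /eqP.
Qed.

Lemma clus0 (R : realFieldType) (P1 P2 : {poly R}) :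
  clus P1 P2 0 = (P2%:P)%:F / ('X)%:F.
Proof. by rewrite /clus /= /Pk /= pevalX1. Qed.

Lemma clus1 (R : realFieldType) (P1 P2 : {poly R}) : clus P1 P2 (0 + 1) = ('Y)%:F.
Proof. by []. Qed.

Lemma clus1' (R : realFieldType) (P1 P2 : {poly R}) : clus P1 P2 1 = ('Y)%:F.
Proof. by []. Qed.

Lemma clus2 (R : realFieldType) (P1 P2 : {poly R}) : clus P1 P2 (1 + 1) = ('X)%:F.
Proof. by []. Qed.

Lemma clus2' (R : realFieldType) (P1 P2 : {poly R}) : clus P1 P2 2 = ('X)%:F.
Proof. by []. Qed.

Lemma clus3 (R : realFieldType) (P1 P2 : {poly R}) :
  clus P1 P2 (2 + 1) = (P1^:P)%:F / ('Y)%:F.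
Proof. by rewrite /clus /= /Pk /= pevalX2. Qed.

Unset Implicit Arguments.

Theorem proposition2p10 (R : realFieldType) (P1 P2 : {poly R})
  (P1_monic : P1 \is monic) (P2_monic : P2 \is monic)
  (P1_pos : forall i, 0 <= P1`_i) (P2_pos : forall i, 0 <= P2`_i)
  (P1_pal : forall z : R, z != 0 -> P1.[z] = z ^+ (size P1).-1 * P1.[z^-1])
  (P2_pal : forall z : R, z != 0 -> P2.[z] = z ^+ (size P2).-1 * P2.[z^-1])
  (a1 a2 : int) (c : nat -> nat -> R) (N : nat) (x : ratfun R)
  (c_supp : forall p q, (N <= p)%N \/ (N <= q)%N -> c p q = 0)
  (c_k : forall p q, ksub P1 P2 (c p q))
  (c_00 : c 0%N 0%N = 1)
  (x_def : x = X1 R ^ (- a1) * X2 R ^ (- a2) *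
               \sum_(p < N) \sum_(q < N) cst (c p q) * X1 R ^+ p * X2 R ^+ q)
  (x_T0 : Tnonneg P1 P2 0 x) (x_T1 : Tnonneg P1 P2 1 x)
  (x_T2 : Tnonneg P1 P2 2 x) :
  forall p q : nat,
    Num.max
      (pos_part (\sum_(1 <= k < p.+1)
         \sum_(ks : {ffun 'I_(size P2).-1 -> 'I_k.+1}
               | (\sum_(i < (size P2).-1) (ks i : nat) == k)%N)
           (-1) ^+ k.-1
           * cZ c (p%:Z - (\sum_(i < (size P2).-1) (i.+1 * ks i)%N)%:Z) q
           * (\prod_(i < (size P2).-1) P2`_i.+1 ^+ ks i)
           * multinom R (a2 - q%:Z + k%:Z - 1)
               [seq (ks i : nat) | i <- enum 'I_(size P2).-1]))
      (pos_part (\sum_(1 <= l < q.+1)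
         \sum_(ls : {ffun 'I_(size P1).-1 -> 'I_l.+1}
               | (\sum_(i < (size P1).-1) (ls i : nat) == l)%N)
           (-1) ^+ l.-1
           * cZ c p (q%:Z - (\sum_(i < (size P1).-1) (i.+1 * ls i)%N)%:Z)
           * (\prod_(i < (size P1).-1) P1`_i.+1 ^+ ls i)
           * multinom R (a1 - p%:Z + l%:Z - 1)
               [seq (ls i : nat) | i <- enum 'I_(size P1).-1]))
    <= c p q.
Proof.
move=> p q.
set Gp : {poly {poly R}} := \poly_(j < N) \poly_(i < N) c i j.
have hGc : forall i j, (Gp`_j)`_i = c i j.
  move=> i j; rewrite /Gp coef_poly; case: ltnP => hj; last first.
    by rewrite coef0 c_supp //; right.
  rewrite coef_poly; case: ltnP => // hi.
  by rewrite c_supp //; left.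
have eG : Gp = \sum_(i < N) \sum_(j < N) ((c i j)%:P)%:P * 'Y ^+ i * 'X ^+ j.
  rewrite /Gp poly_def [RHS]exchange_big /=; apply: eq_bigr => j _.
  rewrite poly_def -mul_polyC rmorph_sum mulr_suml; apply: eq_bigr => i _.
  by rewrite -mul_polyC rmorphM /= rmorphXn.
have hG : x = ('Y)%:F ^ (- a1) * ('X)%:F ^ (- a2) * Gp%:F.
  rewrite x_def eG rmorph_sum; congr (_ * _); apply: eq_bigr => i _.
  rewrite rmorph_sum; apply: eq_bigr => j _.
  by rewrite /cst !rmorphM /= !rmorphXn.
case: x_T0 => s0 [hs0 hx0]; case: x_T1 => s1 [hs1 hx1]; case: x_T2 => s2 [hs2 hx2].
pose Bd (s : seq (R * int * int)) := (\max_(t <- s) (absz t.1.2 + absz t.2))%N.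
have hBd : forall s t, t \in s -> (absz t.1.2 + absz t.2 <= Bd s)%N.
  by move=> s t ht; apply: (@leq_bigmax_seq _ _ xpredT (fun t => absz t.1.2 + absz t.2)%N).
set M := (Bd s0 + Bd s1 + Bd s2 + absz a1 + absz a2 + p + q)%N.
have hY0 : ('Y : {poly {poly R}}) != 0 by rewrite polyC_eq0 polyX_eq0.
have hX0 : ('X : {poly {poly R}}) != 0 by rewrite polyX_eq0.
have h1 : \sum_(1 <= k < p.+1)
         \sum_(ks : {ffun 'I_(size P2).-1 -> 'I_k.+1}
               | (\sum_(i < (size P2).-1) (ks i : nat) == k)%N)
           (-1) ^+ k.-1
           * cZ c (p%:Z - (\sum_(i < (size P2).-1) (i.+1 * ks i)%N)%:Z) q
           * (\prod_(i < (size P2).-1) P2`_i.+1 ^+ ks i)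
           * multinom R (a2 - q%:Z + k%:Z - 1)
               [seq (ks i : nat) | i <- enum 'I_(size P2).-1] <= c p q.
  have hW : (P2%:P : {poly {poly R}}) != 0 by rewrite polyC_eq0 monic_neq0.
  have ha1 : 0 <= M%:Z - a1 by rewrite /M; lia.
  have ha2 : 0 <= M%:Z - a2 by rewrite /M; lia.
  have hb : forall t, t \in s0 -> [/\ 0 <= M%:Z + t.1.2, 0 <= M%:Z - t.1.2 & 0 <= M%:Z + t.2].
    move=> [[r i] j] ht; have h := hBd _ _ ht; rewrite /M; move: h; simpl; generalize (Bd s0) (Bd s1) (Bd s2) => b0 b1 b2 h; split; lia.
  have hE : ('Y)%:F ^ (- a1) * ('X)%:F ^ (- a2) * Gp%:F =
      \sum_(t <- s0) cst t.1.1 * ((P2%:P)%:F / ('X)%:F) ^ (t.1.2) * ('Y)%:F ^ (t.2).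
    by rewrite -hG hx0 clus0 clus1.
  have eq0 := @clear R 'Y 'X (P2%:P) Gp a1 a2 s0 (fun t => t.1.2) (fun t => t.2) M
    hY0 hX0 hW ha1 ha2 hb hE.
  have hf : forall t, t \in s0 ->
      addn (absz (M%:Z + t.1.2)) (absz (M%:Z - t.1.2)) = addn M M.
    move=> [[r i] j] ht; have h := hBd _ _ ht; rewrite /M; move: h; simpl.
    generalize (Bd s0) (Bd s1) (Bd s2) => b0 b1 b2 h; lia.
  have hq : leq (addn (absz (M%:Z - a2)) q) (addn M M).
    rewrite /M; generalize (Bd s0) (Bd s1) (Bd s2) => b0 b1 b2; lia.
  have [H [hH eqH]] := @extract R P2 Gp (absz (M%:Z - a1)) (absz (M%:Z - a2)) M s0
    (fun t => t.1.1) (fun t => absz (M%:Z + t.1.2)) (fun t => absz (M%:Z - t.1.2))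
    (fun t => absz (M%:Z + t.2)) q
    (fun t ht => proj2 (hs0 t ht)) hf hq eq0.
  have hM' : Posz (subn (addn M M) (addn (absz (M%:Z - a2)) q)) = M%:Z + (a2 - q%:Z).
    rewrite /M; generalize (Bd s0) (Bd s1) (Bd s2) => b0 b1 b2; lia.
  have hc := core p (pal0 P2_monic P2_pal) hM' eqH.
  have hP : forall n : nat, (fun z => cZ c z q) (Posz n) = (Gp`_q)`_n.
    by move=> n; rewrite hGc.
  have hN : forall n : nat, (fun z => cZ c z q) (Negz n) = 0 by [].
  rewrite (@combine R P2 (Gp`_q) (fun z => cZ c z q) (a2 - q%:Z) _ p (leq_addl _ _) hP hN) in hc.
  by have := hH (absz (M%:Z - a1) + p)%N; rewrite hc hGc subr_ge0.
have hq : leq (addn (absz (M%:Z - a2)) q) (addn M M).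
  rewrite /M; generalize (Bd s0) (Bd s1) (Bd s2) => b0 b1 b2; lia.
have ha1 : 0 <= M%:Z - a1 by rewrite /M; lia.
have ha2 : 0 <= M%:Z - a2 by rewrite /M; lia.
have h0 : 0 <= c p q.
  have hW : ((1 : {poly R})%:P : {poly {poly R}}) != 0 by rewrite polyC_eq0 oner_eq0.
  have hb : forall t, t \in s1 ->
      [/\ 0 <= M%:Z + (- t.2), 0 <= M%:Z - (- t.2) & 0 <= M%:Z + t.1.2].
    move=> [[r i] j] ht; have h := hBd _ _ ht; rewrite /M; move: h; simpl.
    generalize (Bd s0) (Bd s1) (Bd s2) => b0 b1 b2 h; split; lia.
  have hE : ('Y)%:F ^ (- a1) * ('X)%:F ^ (- a2) * Gp%:F =
      \sum_(t <- s1) cst t.1.1 * ((((1 : {poly R})%:P))%:F / ('X)%:F) ^ (- t.2)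
        * ('Y)%:F ^ (t.1.2).
    rewrite -hG hx1 clus1' clus2; apply: eq_bigr => t _.
    by rewrite polyC1 rmorph1 div1r exprz_inv opprK mulrAC.
  have eq1 := @clear R 'Y 'X ((1 : {poly R})%:P) Gp a1 a2 s1 (fun t => - t.2)
    (fun t => t.1.2) M hY0 hX0 hW ha1 ha2 hb hE.
  have hf : forall t, t \in s1 ->
      addn (absz (M%:Z + - t.2)) (absz (M%:Z - - t.2)) = addn M M.
    move=> [[r i] j] ht; have h := hBd _ _ ht; rewrite /M; move: h; simpl.
    generalize (Bd s0) (Bd s1) (Bd s2) => b0 b1 b2 h; lia.
  have [H [hH eqH]] := @extract R 1 Gp (absz (M%:Z - a1)) (absz (M%:Z - a2)) M s1
    (fun t => t.1.1) (fun t => absz (M%:Z + - t.2)) (fun t => absz (M%:Z - - t.2))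
    (fun t => absz (M%:Z + t.1.2)) q
    (fun t ht => proj2 (hs1 t ht)) hf hq eq1.
  rewrite !expr1n mulr1 mul1r in eqH.
  by have := hH (absz (M%:Z - a1) + p)%N; rewrite -eqH coefXnM ltnNge leq_addr /= addKn hGc.
have h2 : \sum_(1 <= l < q.+1)
         \sum_(ls : {ffun 'I_(size P1).-1 -> 'I_l.+1}
               | (\sum_(i < (size P1).-1) (ls i : nat) == l)%N)
           (-1) ^+ l.-1
           * cZ c p (q%:Z - (\sum_(i < (size P1).-1) (i.+1 * ls i)%N)%:Z)
           * (\prod_(i < (size P1).-1) P1`_i.+1 ^+ ls i)
           * multinom R (a1 - p%:Z + l%:Z - 1)
               [seq (ls i : nat) | i <- enum 'I_(size P1).-1] <= c p q.
  have hW : (P1^:P : {poly {poly R}}) != 0 by rewrite map_polyC_eq0 monic_neq0.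
  have hb : forall t, t \in s2 ->
      [/\ 0 <= M%:Z + t.2, 0 <= M%:Z - t.2 & 0 <= M%:Z + t.1.2].
    move=> [[r i] j] ht; have h := hBd _ _ ht; rewrite /M; move: h; simpl.
    generalize (Bd s0) (Bd s1) (Bd s2) => b0 b1 b2 h; split; lia.
  have hE : ('X)%:F ^ (- a2) * ('Y)%:F ^ (- a1) * Gp%:F =
      \sum_(t <- s2) cst t.1.1 * ((P1^:P)%:F / ('Y)%:F) ^ (t.2) * ('X)%:F ^ (t.1.2).
    rewrite [_ ^ (- a2) * _]mulrC -hG hx2 clus2' clus3; apply: eq_bigr => t _.
    by rewrite mulrAC.
  have eq2 := @clear R 'X 'Y (P1^:P) Gp a2 a1 s2 (fun t => t.2)
    (fun t => t.1.2) M hX0 hY0 hW ha2 ha1 hb hE.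
  have eq2' : swapXY Gp * 'Y ^+ absz (M%:Z - a2) * 'X ^+ absz (M%:Z - a1) * (P1%:P) ^+ M =
     \sum_(t <- s2) ((t.1.1)%:P)%:P * (P1%:P) ^+ absz (M%:Z + t.2) *
        'X ^+ absz (M%:Z - t.2) * 'Y ^+ absz (M%:Z + t.1.2).
    have := congr1 swapXY eq2.
    rewrite !rmorphM /= !rmorphXn /= swapXY_X swapXY_Y swapXY_map_polyC rmorph_sum /= => ->.
    apply: eq_bigr => t _.
    by rewrite !rmorphM /= !rmorphXn /= swapXY_X swapXY_Y swapXY_map_polyC swapXY_polyC map_polyC.
  have hf : forall t, t \in s2 ->
      addn (absz (M%:Z + t.2)) (absz (M%:Z - t.2)) = addn M M.
    move=> [[r i] j] ht; have h := hBd _ _ ht; rewrite /M; move: h; simpl.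
    generalize (Bd s0) (Bd s1) (Bd s2) => b0 b1 b2 h; lia.
  have hq2 : leq (addn (absz (M%:Z - a1)) p) (addn M M).
    rewrite /M; generalize (Bd s0) (Bd s1) (Bd s2) => b0 b1 b2; lia.
  have [H [hH eqH]] := @extract R P1 (swapXY Gp) (absz (M%:Z - a2)) (absz (M%:Z - a1)) M s2
    (fun t => t.1.1) (fun t => absz (M%:Z + t.2)) (fun t => absz (M%:Z - t.2))
    (fun t => absz (M%:Z + t.1.2)) p
    (fun t ht => proj2 (hs2 t ht)) hf hq2 eq2'.
  have hM' : Posz (subn (addn M M) (addn (absz (M%:Z - a1)) p)) = M%:Z + (a1 - p%:Z).
    rewrite /M; generalize (Bd s0) (Bd s1) (Bd s2) => b0 b1 b2; lia.
  have hc := core q (pal0 P1_monic P1_pal) hM' eqH.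
  have hP : forall n : nat, (fun z => cZ c p z) (Posz n) = ((swapXY Gp)`_p)`_n.
    by move=> n; rewrite coef_swapXY hGc.
  have hN : forall n : nat, (fun z => cZ c p z) (Negz n) = 0 by [].
  rewrite (@combine R P1 ((swapXY Gp)`_p) (fun z => cZ c p z) (a1 - p%:Z) _ q
     (leq_addl _ _) hP hN) in hc.
  by have := hH (absz (M%:Z - a2) + q)%N; rewrite hc coef_swapXY hGc subr_ge0.
by rewrite /pos_part !ge_max h1 h2 h0.
Qed.
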